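(* Let $N,K,d$ be positive integers, let $\bm{r},\bm{q}\in\mathbb{R}^d$, let $\mathcal{H}$ be a finite nonempty scenario set, and for each $k\in\{1,\dots,K\}$ and $h\in\mathcal{H}$ let $\bm{M^{k,h}}\in\mathbb{R}^{d\times d}$. Let $$\mathcal{X}=\Big\{\bm{x}\in\{0,1\}^{N\times K}:\ \textstyle\sum_{k=1}^K x_{n,k}=1,\ n=1,\dots,N\Big\},$$ and for $h\in\mathcal{H}$ and $\bm{x}\in\mathcal{X}$ let $f_h(\bm{x})=\bm{r}^\top\Big[\prod_{n=1}^N\Big(\sum_{k=1}^K \bm{M^{k,h}}x_{n,k}\Big)\Big]\bm{q}$. Let $\alpha\in(0,1]$, and let $\mathcal{H}^1,\dots,\mathcal{H}^P$ be a partition of $\mathcal{H}$ into $P$ subsets of equal cardinality with $\alpha|\mathcal{H}^p|\in\mathbb{Z}_+$ for all $p$ (so also $\alpha|\mathcal{H}|\in\mathbb{Z}_+$). Let $\hat z_{\mathcal{H}}=\max_{\bm{x}\in\mathcal{X}} s_\alpha\big([f_h(\bm{x})]_{h\in\mathcal{H}}\big)$, and for each $p$ let $\bm{x^{(p)}}\in\arg\max_{\bm{x}\in\mathcal{X}} s_\alpha\big([f_h(\bm{x})]_{h\in\mathcal{H}^p}\big)$. Then $$\max_{p=1,\dots,P} s_\alpha\big([f_h(\bm{x^{(p)}})]_{h\in\mathcal{H}}\big)\ \le\ \hat z_{\mathcal{H}}\ \le\ \frac1P\sum_{p=1}^P s_\alpha\big([f_h(\bm{x^{(p)}})]_{h\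in\mathcal{H}^p}\big).$$
   Context: For a finite index set $\mathcal{G}$, a vector $\bm{\upsilon}\in\mathbb{R}^{|\mathcal{G}|}$ and $\alpha\in(0,1]$ with $\alpha|\mathcal{G}|\in\mathbb{Z}_+$, $s_\alpha(\bm{\upsilon})$ denotes the average of the $\alpha|\mathcal{G}|$ smallest entries of $\bm{\upsilon}$ (a conditional-value-at-risk type quantity). In the paper $\hat z_{\mathcal{H}}$ is defined as the optimal value of a mixed-integer linear program that is an exact reformulation of the maximization problem written above. *)

(* Defs.v *)
From mathcomp Require Import all_boot all_order all_algebra.
Set Implicit Arguments. Unset Strict Implicit. Unset Printing Implicit Defensive.
Import Order.TTheory GRing.Theory Num.Theory.
Local Open Scope ring_scope.

(* The number alpha*|A| is assumed (by the theorem's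
   hypotheses) to be a natural number; here it is read off with truncn. *)
Definition s_alpha (R : archiRealFieldType) (T : finType) (alpha : R)
    (A : {set T}) (v : T -> R) : R :=
  let k := Num.truncn (alpha * (#|A|)%:R) in
  (\sum_(y <- take k (sort <=%R [seq v h | h <- enum A])) y) / k%:R.

Definition inX (R : pzRingType) (N K : nat) (x : 'M[R]_(N, K)) : Prop :=
  (forall n k, x n k = 0 \/ x n k = 1) /\
  (forall n : 'I_N, \sum_(k < K) x n k = 1).

Definition fobj (R : comPzRingType) (T : finType) (N K d : nat)
    (r q : 'cV[R]_d) (M : 'I_K -> T -> 'M[R]_d) (x : 'M[R]_(N, K)) (h : T) : R :=
  ((r^T *m (\big[@mulmx R d d d / 1%:M]_(n < N) (\sum_(k < K) x n k *: M k h)))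
     *m q) ord0 ord0.

(* Main.v *)
Require Import Defs.
From mathcomp Require Import all_boot all_order all_algebra.
Import Order.TTheory GRing.Theory Num.Theory.
Local Open Scope ring_scope.


Lemma key (R : realDomainType) (k : nat) : forall (s t : seq R),
  size t = k -> (forall x, count_mem x t <= count_mem x s)%N ->
  \sum_(y <- take k (sort <=%R s)) y <= \sum_(y <- t) y.
Proof.
elim: k => [|k IH] s t.
  by case: t => // _ _; rewrite take0 !big_nil.
case: t => // z t' [szt] cnt.
have zs : z \in s.
  by rewrite -has_pred1 has_count; apply: leq_trans (cnt z); rewrite /= eqxx.
case E: (sort <=%R s) => [|y w].
  by move: zs; rewrite -(mem_sort <=%R) E.
have ys : y \in s by rewrite -(mem_sort <=%R) E mem_head.
have srt : sorted <=%R (y :: w) by rewrite -E; apply: sort_sorted; exact: le_total.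
have pw : perm_eq w (rem y s).
  rewrite -(perm_cons y); apply: perm_trans (perm_to_rem ys).
  by rewrite -E perm_sort.
have wsort : sort <=%R (rem y s) = w.
  apply: le_sorted_eq; first by apply: sort_sorted; exact: le_total.
    exact: path_sorted srt.
  by rewrite perm_sort perm_sym.
have ymin : all (fun u => y <= u) w by apply: order_path_min => //; exact: le_trans.
have cs : forall x, count_mem x s = ((y == x) + count_mem x (rem y s))%N.
  by move=> x; rewrite (permP (perm_to_rem ys)).
rewrite /= big_cons -wsort.
case yt: (y \in z :: t').
  rewrite (perm_big _ (perm_to_rem yt)) big_cons lerD2l.
  apply: IH; first by rewrite size_rem //= szt.
  move=> x; have := cnt x; rewrite (permP (perm_to_rem yt)) cs /=.
  by rewrite leq_add2l.
rewrite big_cons; apply: lerD.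
  have : z \in y :: w by rewrite -E mem_sort.
  rewrite in_cons; case/orP => [/eqP zy|zw].
    by move: yt; rewrite zy mem_head.
  by move/allP: ymin; apply.
apply: IH => // x; have := cnt x; rewrite cs /=.
have yt' : y \notin t' by move: yt; rewrite in_cons; case: (y \in t'); rewrite ?orbT.
case: (eqVneq x y) => [->|nxy].
  by move: yt'; rewrite -has_pred1 has_count -leqNgt leqn0 => /eqP->.
idtac.
rewrite add0n => h; apply: leq_trans h; exact: leq_addl.
Qed.

Lemma count_enum (R : eqType) (T : finType) (A : {set T}) (v : T -> R) x :
  count_mem x [seq v h | h <- enum A] = (\sum_(h in A | v h == x) 1)%N.
Proof. by rewrite count_map -sum1_count big_enum_cond. Qed.

Lemma superadd (R : realDomainType) (H : finType) (P : nat) (part : H -> 'I_P)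
  (m k0 : nat) (v : H -> R) :
  (forall p : 'I_P, #|[set h | part h == p]| = m) -> (k0 <= m)%N ->
  \sum_(y <- take (P * k0) (sort <=%R [seq v h | h <- enum [set: H]])) y <=
  \sum_(p < P) \sum_(y <- take k0 (sort <=%R [seq v h | h <- enum [set h | part h == p]])) y.
Proof.
move=> hc hk.
set fl := \big[cat/[::]]_(p < P) take k0 (sort <=%R [seq v h | h <- enum [set h | part h == p]]).
have -> : \sum_(p < P) \sum_(y <- take k0 (sort <=%R [seq v h | h <- enum [set h | part h == p]])) y
   = \sum_(y <- fl) y.
  rewrite /fl; apply/esym/(big_morph (fun s => \sum_(y <- s) y)).
    by move=> a b; rewrite big_cat.
  by rewrite big_nil.
apply: key.
  rewrite /fl (big_morph size (@size_cat _) (erefl (size [::]))).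
  rewrite (eq_bigr (fun _ => k0)); first by rewrite sum_nat_const card_ord.
  move=> p _; rewrite size_takel // size_sort size_map -cardE hc //.
move=> x; rewrite /fl (big_morph (count_mem x) (@count_cat _ _) (erefl (count_mem x [::]))).
rewrite count_enum (partition_big part predT) //=.
apply: leq_sum => p _.
apply: (@leq_trans (count_mem x (sort <=%R [seq v h | h <- enum [set h | part h == p]]))).
  by rewrite -{2}(cat_take_drop k0 (sort _ _)) count_cat leq_addr.
rewrite (permP (permEl (perm_sort _ _))) count_enum.
by apply: eq_leq; apply: eq_bigl => h; rewrite !in_set andbC.
Qed.

Theorem proposition2 (R : archiRealFieldType) (N K d : nat) (H : finType)
  (r q : 'cV[R]_d) (M : 'I_K -> H -> 'M[R]_d) (alpha : R)
  (P : nat) (part : H -> 'I_P) (m : nat)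
  (xp : 'I_P -> 'M[R]_(N, K)) (zhat : R) :
  (0 < N)%N -> (0 < K)%N -> (0 < d)%N -> (0 < #|H|)%N ->
  0 < alpha -> alpha <= 1 ->
  (* H^p := [set h | part h == p], p < P, is a partition of H into P parts *)
  (0 < P)%N ->
  (forall p : 'I_P, #|[set h | part h == p]| = m) ->
  (forall p : 'I_P, exists k : nat, alpha * (#|[set h | part h == p]|)%:R = k%:R) ->
  (* zhat is the maximum over X of s_alpha([f_h(x)]_{h in H}) *)
  (exists2 x : 'M[R]_(N, K), inX x & zhat = s_alpha alpha [set: H] (fobj r q M x)) ->
  (forall x : 'M[R]_(N, K), inX x -> s_alpha alpha [set: H] (fobj r q M x) <= zhat) ->
  (* x^(p) maximizes s_alpha([f_h(x)]_{h in H^p}) over X *)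
  (forall p, inX (xp p)) ->
  (forall p (x : 'M[R]_(N, K)), inX x ->
     s_alpha alpha [set h | part h == p] (fobj r q M x)
     <= s_alpha alpha [set h | part h == p] (fobj r q M (xp p))) ->
  (forall p : 'I_P, s_alpha alpha [set: H] (fobj r q M (xp p)) <= zhat) /\
  zhat <= P%:R^-1 * \sum_(p < P) s_alpha alpha [set h | part h == p] (fobj r q M (xp p)).
Proof.
move=> _ _ _ _ a0 a1 hP hc hint [xs xsX ->] hmax hxp hopt.
split; first by move=> p; apply: hmax.
set k0 := Num.truncn (alpha * m%:R).
have ak : alpha * m%:R = k0%:R.
  have [k hk] := hint (Ordinal hP); rewrite hc in hk.
  by rewrite /k0 hk natrK.
have k0m : (k0 <= m)%N.
  by rewrite -(ler_nat R) -ak ler_piMl // ler0n.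
have cardH : #|[set: H]| = (P * m)%N.
  rewrite -sum1_card (partition_big part predT) //=.
  rewrite (eq_bigr (fun _ => m)); first by rewrite sum_nat_const card_ord.
  by move=> p _; rewrite -(hc p) -sum1_card; apply: eq_bigl => h; rewrite !in_set.
have tH : Num.truncn (alpha * (#|[set: H]|)%:R) = (P * k0)%N.
  by rewrite cardH natrM mulrCA ak -natrM natrK.
have tp : forall p : 'I_P, Num.truncn (alpha * (#|[set h | part h == p]|)%:R) = k0.
  by move=> p; rewrite hc.
rewrite /s_alpha tH.
rewrite (eq_bigr (fun p : 'I_P => (\sum_(y <- take k0 (sort <=%R
   [seq fobj r q M (xp p) h | h <- enum [set h | part h == p]])) y) / k0%:R)); last first.
  by move=> p _; rewrite tp.
rewrite natrM invfM mulrCA.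
apply: ler_wpM2l; first by rewrite invr_ge0 ler0n.
apply: (@le_trans _ _ (\sum_(p < P) ((\sum_(y <- take k0 (sort <=%R
   [seq fobj r q M xs h | h <- enum [set h | part h == p]])) y) / k0%:R))).
  rewrite -mulr_suml; apply: ler_wpM2r; first by rewrite invr_ge0 ler0n.
  exact: superadd.
apply: ler_sum => p _.
have := hopt p xs xsX; rewrite /s_alpha tp; done.
Qed.
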